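(* Let $\alpha>1$ and let $B\subset\mathbb{H}$ be nonempty with $\hat B:=B\setminus\{x\in\mathbb{H}: x_2\le|x_1|^{1/\alpha}\}$ finite. Define $h_0=\max_{x\in\hat B}x_2$ if $\hat B\neq\emptyset$, and $h_0=\min\{h\in\mathbb{Z}_{\ge0}:\ B\cap([-\lceil h^\alpha\rceil,\lceil h^\alpha\rceil]\times[0,h])\neq\emptyset\}$ if $\hat B=\emptyset$. Let $l_{h_0}=\{(i,h_0):\ |i|\le\lfloor h_0^\alpha\rfloor\}$. Then there is a constant $c>0$ such that for all sufficiently large $N$, $$\sum_{w\in l_{h_0}}\bar{\mathcal H}_{B\cup l_{h_0},N}(w)\ge c.$$
   Context: $\mathbb{H}=\{(x_1,x_2)\in\mathbb{Z}^2:\ x_2\ge 0\}$ and $L_n=\{(x_1,n):x_1\in\mathbb{Z}\}$. $(S_n)_{n\ge0}$ is a simple random walk on $\mathbb{Z}^2$; $P_z$ denotes its law started at $z$. For $A\subset\mathbb{Z}^2$, $\bar\tau_A=\min\{n\ge0: S_n\in A\}$. For $A\subset\mathbb{H}$, $x\in A$ and $N\ge1$, define $$\bar{\mathcal H}_{A,N}(x)=\sum_{z\in L_N\setminus A}P_z\big(S_{\bar\tau_{A\cup L_0}}=x\big).$$ Integer intervals $[a,b]$ denote $\{a,a+1,\dots,b\}$. *)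

(* Defs.v *)
From Stdlib Require Import Reals ZArith List.
Open Scope R_scope.

(* Points of Z^2 ; subsets of Z^2 are boolean characteristic functions
   (classically, every subset has one). *)
Definition pt := (Z * Z)%type.
Definition zset := pt -> bool.

(* Real power with the convention 0^y = 0 for y > 0 (Stdlib's Rpower 0 y = 1). *)
Definition rpow (x y : R) : R :=
  if Req_EM_T x 0 then 0 else Rpower x y.

Definition Zfloor (x : R) : Z := (up x - 1)%Z.
Definition Zceil (x : R) : Z := (- Zfloor (- x))%Z.

Definition sumR {A : Type} (f : A -> R) (l : list A) : R :=
  fold_right (fun a acc => f a + acc) 0 l.

Definition zrange (a b : Z) : list Z :=
  map (fun k => (a + Z.of_nat k)%Z) (seq 0 (Z.to_nat (b - a + 1))).

Definition nbrs (z : pt) : list pt :=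
  let '(a, b) := z in
  ((a + 1, b) :: (a - 1, b) :: (a, b + 1) :: (a, b - 1) :: nil)%Z.

(* paths_to A m z x = number of nearest-neighbour paths s_0 = z, ..., s_m = x
   such that s_i \notin A \cup L_0 for all i < m.
   Hence P_z(S_{tau_{A \cup L_0}} = x) = sum_m paths_to A m z x / 4^m. *)
Fixpoint paths_to (A : zset) (m : nat) (z x : pt) : nat :=
  match m with
  | O => if (Z.eqb (fst z) (fst x) && Z.eqb (snd z) (snd x))%bool then 1%nat else 0%nat
  | S m' =>
      if (A z || Z.eqb (snd z) 0)%bool then 0%nat
      else fold_right (fun y acc => (paths_to A m' y x + acc)%nat) 0%nat (nbrs z)
  end.

(* Partial sum of Hbar_{A,N}(x): starting points z = (i,N) with |i| <= K,
   z \notin A, and paths of length <= K. Hbar_{A,N}(x) is the supremum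
   (limit, as the terms are nonnegative) of these partial sums in K. *)
Definition Hbar_partial (A : zset) (N : Z) (x : pt) (K : nat) : R :=
  sumR (fun i =>
          if A (i, N) then 0
          else sumR (fun m => INR (paths_to A m (i, N) x) / 4 ^ m) (seq 0 (S K)))
       (zrange (- Z.of_nat K) (Z.of_nat K)).

Definition below_curve (alpha : R) (x : pt) : Prop :=
  (0 <= snd x)%Z /\ IZR (snd x) <= rpow (Rabs (IZR (fst x))) (1 / alpha).

Definition in_Bhat (alpha : R) (B : zset) (x : pt) : Prop :=
  B x = true /\ ~ below_curve alpha x.

Definition is_h0 (alpha : R) (B : zset) (h0 : Z) : Prop :=
  ((exists x, in_Bhat alpha B x) /\
     (exists x, in_Bhat alpha B x /\ snd x = h0) /\
     (forall x, in_Bhat alpha B x -> (snd x <= h0)%Z))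
  \/
  ((forall x, ~ in_Bhat alpha B x) /\
   let meets h := exists x : pt, B x = true /\
        (Z.abs (fst x) <= Zceil (rpow (IZR h) alpha))%Z /\ (0 <= snd x <= h)%Z in
   (0 <= h0)%Z /\ meets h0 /\ (forall h, (0 <= h < h0)%Z -> ~ meets h)).

Definition lh_bound (alpha : R) (h0 : Z) : Z := Zfloor (rpow (IZR h0) alpha).

Definition in_lh (alpha : R) (h0 : Z) : zset :=
  fun p => (Z.eqb (snd p) h0 && Z.leb (Z.abs (fst p)) (lh_bound alpha h0))%bool.

Definition setU (A C : zset) : zset := fun p => (A p || C p)%bool.

Definition total_partial (alpha : R) (B : zset) (h0 N : Z) (K : nat) : R :=
  sumR (fun i => Hbar_partial (setU B (in_lh alpha h0)) N (i, h0) K)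
       (zrange (- lh_bound alpha h0) (lh_bound alpha h0)).

(* Main.v *)
Require Import Defs.
From Stdlib Require Import Reals ZArith List Lia Lra Psatz Classical.
Open Scope R_scope.

Lemma termA : forall (A : zset) z1 z2 n1 n2,
  (if (A (n1,n2) || (n2 =? 0)%Z)%bool then 0 else if ((z1 =? n1)%Z && (z2 =? n2)%Z)%bool then 1 else 0)%nat
  = (if ((z1 =? n1)%Z && (z2 =? n2)%Z)%bool then (if (A (z1,z2) || (z2 =? 0)%Z)%bool then 0 else 1) else 0)%nat.
Proof. intros. destruct (Z.eqb_spec z1 n1), (Z.eqb_spec z2 n2); subst; simpl; auto; try (destruct (A _ || _)%bool; reflexivity).
  all: destruct (A _ || _)%bool; auto. Qed.

Lemma eqb_shift : forall a b c d, (a - b = c - d)%Z -> (a =? b)%Z = (c =? d)%Z.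
Proof. intros. destruct (Z.eqb_spec a b), (Z.eqb_spec c d); auto; lia. Qed.

Definition pk (A : zset) m z n : nat :=
  if (A n || (snd n =? 0)%Z)%bool then 0%nat else paths_to A m z n.

Lemma PL : forall A m z x,
  paths_to A (S m) z x =
  (pk A m z (fst x + 1, snd x)%Z + pk A m z (fst x - 1, snd x)%Z +
   pk A m z (fst x, snd x + 1)%Z + pk A m z (fst x, snd x - 1)%Z)%nat.
Proof.
  intros A m. induction m as [|m IH]; intros [z1 z2] [x1 x2].
  - unfold pk; simpl. rewrite !termA.
    rewrite (eqb_shift (z1+1) x1 z1 (x1-1)) by lia.
    rewrite (eqb_shift (z1-1) x1 z1 (x1+1)) by lia.
    rewrite (eqb_shift (z2+1) x2 z2 (x2-1)) by lia.
    rewrite (eqb_shift (z2-1) x2 z2 (x2+1)) by lia.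
    destruct (A (z1,z2) || (z2 =? 0)%Z)%bool; destruct (z1 =? x1-1)%Z, (z1 =? x1+1)%Z, (z1 =? x1)%Z,
      (z2 =? x2)%Z, (z2 =? x2-1)%Z, (z2 =? x2+1)%Z; simpl; lia.
  - remember (S m) as m'. simpl. rewrite !IH. unfold pk; simpl. subst m'. simpl.
    destruct (A (z1,z2) || (z2 =? 0)%Z)%bool;
    destruct (A (x1+1,x2)%Z || (x2 =? 0)%Z)%bool, (A (x1-1,x2)%Z || (x2 =? 0)%Z)%bool,
      (A (x1,x2+1)%Z || (x2+1 =? 0)%Z)%bool, (A (x1,x2-1)%Z || (x2-1 =? 0)%Z)%bool; lia.
Qed.

Definition sum4 (f : pt -> R) (x : pt) : R :=
  f (fst x + 1, snd x)%Z + f (fst x - 1, snd x)%Z + f (fst x, snd x + 1)%Z + f (fst x, snd x - 1)%Z.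

Fixpoint Qr (Sd : pt -> bool) (m : nat) (z y : pt) : R :=
  match m with
  | O => if (Sd y && (fst z =? fst y)%Z && (snd z =? snd y)%Z)%bool then 1 else 0
  | S m' => if Sd y then sum4 (fun n => Qr Sd m' z n) y else 0
  end.

Lemma Qr_zero : forall Sd m z y, Sd y = false -> Qr Sd m z y = 0.
Proof. intros Sd [|m] z y H; simpl; rewrite H; reflexivity. Qed.

Lemma Qr_nonneg : forall Sd m z y, 0 <= Qr Sd m z y.
Proof. intros Sd m. induction m as [|m IH]; intros z y; simpl.
  - destruct (_ && _)%bool; lra.
  - destruct (Sd y); [unfold sum4; pose proof (IH z (fst y + 1, snd y)%Z);
    pose proof (IH z (fst y - 1, snd y)%Z); pose proof (IH z (fst y, snd y+1)%Z);
    pose proof (IH z (fst y, snd y - 1)%Z); lra | lra]. Qed.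

Section Paths.
Variable A : zset.
Variable Sd : pt -> bool.
Hypothesis Hok : forall n, Sd n = true -> (A n || (snd n =? 0)%Z)%bool = false.

Lemma Qr_le_paths : forall m z y, Qr Sd m z y <= INR (paths_to A m z y).
Proof.
  induction m as [|m IH]; intros z y.
  - destruct z as [z1 z2], y as [y1 y2]; simpl.
    destruct (Sd (y1,y2)), (z1 =? y1)%Z, (z2 =? y2)%Z; simpl; lra.
  - rewrite PL. rewrite !plus_INR. simpl. destruct (Sd y) eqn:Hy; [|
      pose proof (pos_INR (pk A m z (fst y + 1, snd y)%Z));
      pose proof (pos_INR (pk A m z (fst y - 1, snd y)%Z));
      pose proof (pos_INR (pk A m z (fst y, snd y + 1)%Z));
      pose proof (pos_INR (pk A m z (fst y, snd y - 1)%Z)); lra].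
    assert (Hn : forall n, Qr Sd m z n <= INR (pk A m z n)).
    { intro n. unfold pk. destruct (Sd n) eqn:Hn.
      - rewrite (Hok n Hn). apply IH.
      - rewrite Qr_zero by auto. apply pos_INR. }
    unfold sum4.
    pose proof (Hn (fst y + 1, snd y)%Z); pose proof (Hn (fst y - 1, snd y)%Z);
    pose proof (Hn (fst y, snd y + 1)%Z); pose proof (Hn (fst y, snd y - 1)%Z); lra.
Qed.

Lemma Qr_le_paths_w : forall m z w,
  Qr Sd m z (fst w, snd w + 1)%Z <= INR (paths_to A (S m) z w).
Proof.
  intros. rewrite PL, !plus_INR.
  pose proof (pos_INR (pk A m z (fst w + 1, snd w)%Z));
  pose proof (pos_INR (pk A m z (fst w - 1, snd w)%Z));
  pose proof (pos_INR (pk A m z (fst w, snd w - 1)%Z)).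
  assert (Qr Sd m z (fst w, snd w + 1)%Z <= INR (pk A m z (fst w, snd w + 1)%Z)).
  { unfold pk. destruct (Sd (fst w, snd w + 1)%Z) eqn:Hn.
      - rewrite (Hok _ Hn). apply Qr_le_paths.
      - rewrite Qr_zero by auto. apply pos_INR. }
  lra.
Qed.
End Paths.

Lemma sumR_ext : forall {T} (f g : T -> R) l, (forall x, In x l -> f x = g x) -> sumR f l = sumR g l.
Proof. induction l; simpl; intros; auto. rewrite H, IHl; auto. Qed.
Lemma sumR_le : forall {T} (f g : T -> R) l, (forall x, In x l -> f x <= g x) -> sumR f l <= sumR g l.
Proof. induction l; simpl; intros; [lra|]. pose proof (H a (or_introl eq_refl)).
  pose proof (IHl (fun x h => H x (or_intror h))). lra. Qed.
Lemma sumR_plus : forall {T} (f g : T -> R) l, sumR (fun x => f x + g x) l = sumR f l + sumR g l.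
Proof. induction l; simpl; intros; [lra|]. rewrite IHl; lra. Qed.
Lemma sumR_scal : forall {T} (f : T -> R) c l, sumR (fun x => c * f x) l = c * sumR f l.
Proof. induction l; simpl; intros; [lra|]. rewrite IHl; lra. Qed.
Lemma sumR_div : forall {T} (f : T -> R) c l, sumR (fun x => f x / c) l = sumR f l / c.
Proof. induction l; simpl; intros; [unfold Rdiv; lra|]. rewrite IHl; unfold Rdiv; lra. Qed.
Lemma sumR_zero : forall {T} (l : list T), sumR (fun _ => 0) l = 0.
Proof. induction l; simpl; auto. rewrite IHl; lra. Qed.
Lemma sumR_nonneg : forall {T} (f : T -> R) l, (forall x, In x l -> 0 <= f x) -> 0 <= sumR f l.
Proof. intros. rewrite <- (sumR_zero l). apply sumR_le. auto. Qed.
Lemma sumR_elem : forall {T} (f : T -> R) l a, In a l -> (forall x, In x l -> 0 <= f x) -> f a <= sumR f l.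
Proof. induction l; simpl; intros; [contradiction|]. destruct H as [<-|H].
  - pose proof (sumR_nonneg f l (fun x h => H0 x (or_intror h))). lra.
  - pose proof (IHl a0 H (fun x h => H0 x (or_intror h))). pose proof (H0 a (or_introl eq_refl)). lra. Qed.
Lemma sumR_swap : forall {T U} (F : T -> U -> R) l1 l2,
  sumR (fun i => sumR (fun j => F i j) l2) l1 = sumR (fun j => sumR (fun i => F i j) l1) l2.
Proof. induction l1; simpl; intros. - rewrite sumR_zero; auto.
  - rewrite IHl1. rewrite <- sumR_plus. reflexivity. Qed.
Lemma sumR_map : forall {T U} (f : U -> R) (g : T -> U) l, sumR f (map g l) = sumR (fun x => f (g x)) l.
Proof. induction l; simpl; auto. rewrite IHl; auto. Qed.

Lemma zrange_cons : forall a b, (a <= b)%Z -> zrange a b = a :: zrange (a+1) b.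
Proof. intros. unfold zrange. replace (Z.to_nat (b - a + 1)) with (S (Z.to_nat (b - (a+1) + 1))) by lia.
  simpl. f_equal. lia. rewrite <- seq_shift, map_map. apply map_ext. intros. lia. Qed.
Lemma zrange_nil : forall a b, (b < a)%Z -> zrange a b = nil.
Proof. intros. unfold zrange. replace (Z.to_nat (b - a + 1)) with 0%nat by lia. reflexivity. Qed.
Lemma In_zrange : forall a b c, In c (zrange a b) <-> (a <= c <= b)%Z.
Proof. intros. unfold zrange. rewrite in_map_iff. split.
  - intros [k [<- Hk]]. apply in_seq in Hk. lia.
  - intros H. exists (Z.to_nat (c - a)). split. lia. apply in_seq. lia. Qed.
Lemma sum_ind_zrange_gen : forall n a b c r, n = Z.to_nat (b - a + 1) ->
  sumR (fun i => if (i =? c)%Z then r else 0) (zrange a b) = if ((a <=? c) && (c <=? b))%Z%bool then r else 0.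
Proof. induction n; intros a b c r Hn.
  - rewrite zrange_nil by lia. simpl. destruct (Z.leb_spec a c), (Z.leb_spec c b); simpl; auto; lia.
  - rewrite zrange_cons by lia. simpl. rewrite (IHn (a+1)%Z b c r) by lia.
    destruct (Z.eqb_spec a c); subst.
    + destruct (Z.leb_spec (c+1) c); try lia. destruct (Z.leb_spec c c), (Z.leb_spec c b); simpl; try lia; lra.
    + destruct (Z.leb_spec (a+1) c), (Z.leb_spec a c), (Z.leb_spec c b); simpl; try lia; lra.
Qed.
Lemma sum_ind_zrange : forall a b c r, (a <= c <= b)%Z ->
  sumR (fun i => if (i =? c)%Z then r else 0) (zrange a b) = r.
Proof. intros. rewrite (sum_ind_zrange_gen _ a b c r eq_refl).
  destruct (Z.leb_spec a c), (Z.leb_spec c b); simpl; auto; lia. Qed.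
Lemma sumR_cons : forall {T} (f : T -> R) a l, sumR f (a :: l) = f a + sumR f l.
Proof. reflexivity. Qed.
Lemma sumR_app : forall {T} (f : T -> R) l1 l2, sumR f (l1 ++ l2) = sumR f l1 + sumR f l2.
Proof. induction l1; simpl; intros. lra. unfold sumR in *. simpl. rewrite IHl1. lra. Qed.

Section Visits.
Variable Sd : pt -> bool.
Variable N : Z.

Fixpoint E (j : nat) (x : pt) : R :=
  match j with
  | O => if (Sd x && (snd x =? N)%Z)%bool then 1 else 0
  | S j' => if Sd x then sum4 (E j') x / 4 else 0
  end.

Lemma E_lemma : forall K j y, (Z.abs (fst y) + Z.of_nat j <= K)%Z ->
  E j y = sumR (fun i => Qr Sd j (i, N) y) (zrange (-K) K) / 4 ^ j.
Proof.
  intros K. induction j as [|j IH]; intros y Hy.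
  - simpl. rewrite (sumR_ext _ (fun i => if (i =? fst y)%Z then (if (Sd y && (N =? snd y)%Z)%bool then 1 else 0) else 0)).
    + rewrite sum_ind_zrange by lia. rewrite Z.eqb_sym. unfold Rdiv; rewrite Rinv_1; lra.
    + intros i _. destruct (Sd y), (i =? fst y)%Z, (N =? snd y)%Z; reflexivity.
  - simpl. destruct (Sd y).
    + unfold sum4 at 1. rewrite !IH by (simpl; lia).
      unfold sum4. rewrite !sumR_plus. field. apply pow_nonzero; lra.
    + rewrite sumR_zero. unfold Rdiv. lra.
Qed.

Fixpoint VK (K : nat) (x : pt) : R :=
  match K with
  | O => E 0 x
  | S K' => E 0 x + (if Sd x then sum4 (VK K') x / 4 else 0)
  end.

Lemma VK_sum : forall K x, VK K x = sumR (fun j => E j x) (seq 0 (S K)).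
Proof.
  induction K as [|K IH]; intros x.
  - simpl. lra.
  - change (seq 0 (S (S K))) with (0%nat :: seq 1 (S K)).
    rewrite sumR_cons, <- seq_shift, sumR_map. simpl VK. f_equal.
    destruct (Sd x) eqn:Hx.
    + unfold sum4. rewrite !IH. rewrite <- !sumR_plus, <- sumR_div.
      apply sumR_ext. intros j _. simpl. rewrite Hx. reflexivity.
    + rewrite (sumR_ext _ (fun _ => 0)). rewrite sumR_zero; auto.
      intros j _. simpl. rewrite Hx. auto.
Qed.

Lemma E_nonneg : forall j x, 0 <= E j x.
Proof. induction j; intros x; simpl. destruct (_ && _)%bool; lra.
  destruct (Sd x); [|lra]. unfold sum4.
  pose proof (IHj (fst x + 1, snd x)%Z); pose proof (IHj (fst x - 1, snd x)%Z);
  pose proof (IHj (fst x, snd x + 1)%Z); pose proof (IHj (fst x, snd x - 1)%Z); lra. Qed.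

Lemma VK_nonneg : forall K x, 0 <= VK K x.
Proof. intros. rewrite VK_sum. apply sumR_nonneg. intros. apply E_nonneg. Qed.

Lemma VK_zero : forall K x, Sd x = false -> VK K x = 0.
Proof. intros [|K] x H; simpl; rewrite H; simpl; lra. Qed.

Lemma VK_grow : forall K x, VK K x <= VK (S K) x.
Proof. intros. rewrite !VK_sum. rewrite (seq_S (S K) 0), sumR_app. simpl.
  pose proof (E_nonneg (S K) x) as HE. simpl in HE. lra. Qed.

Variable L0 : Z.
Hypothesis HSlo : forall x, Sd x = true -> (L0 + 1 <= snd x)%Z.
Hypothesis HN : (L0 + 1 <= N)%Z.

Definition gfun (x : pt) : R := 4 * IZR (Z.min (snd x - L0) (N - L0)).

Lemma g_harm : forall x, (L0 + 1 <= snd x)%Z ->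
  (if (snd x =? N)%Z then 1 else 0) + sum4 gfun x / 4 = gfun x.
Proof.
  intros [a b] H. unfold sum4, gfun; simpl in *.
  destruct (Z.lt_trichotomy b N) as [Hl|[He|Hg]].
  - replace (Z.min (b + 1 - L0) (N - L0)) with (b + 1 - L0)%Z by lia.
    replace (Z.min (b - 1 - L0) (N - L0)) with (b - 1 - L0)%Z by lia.
    replace (Z.min (b - L0) (N - L0)) with (b - L0)%Z by lia.
    destruct (Z.eqb_spec b N); try lia. rewrite !minus_IZR, !plus_IZR. lra.
  - subst. replace (Z.min (N + 1 - L0) (N - L0)) with (N - L0)%Z by lia.
    replace (Z.min (N - 1 - L0) (N - L0)) with (N - 1 - L0)%Z by lia.
    replace (Z.min (N - L0) (N - L0)) with (N - L0)%Z by lia.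
    rewrite Z.eqb_refl. rewrite !minus_IZR. lra.
  - replace (Z.min (b + 1 - L0) (N - L0)) with (N - L0)%Z by lia.
    replace (Z.min (b - 1 - L0) (N - L0)) with (N - L0)%Z by lia.
    replace (Z.min (b - L0) (N - L0)) with (N - L0)%Z by lia.
    destruct (Z.eqb_spec b N); try lia. lra.
Qed.

Lemma g_nonneg : forall x, (L0 <= snd x)%Z -> 0 <= gfun x.
Proof. intros. unfold gfun. apply Rmult_le_pos. lra. apply IZR_le. lia. Qed.

Lemma VK_le_g : forall K x, Sd x = true -> VK K x <= gfun x.
Proof.
  induction K as [|K IH]; intros x Hx.
  - simpl. rewrite Hx. unfold gfun. pose proof (HSlo x Hx).
    assert (1 <= IZR (Z.min (snd x - L0) (N - L0))) by (apply IZR_le; lia).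
    destruct (snd x =? N)%Z; simpl; lra.
  - simpl. rewrite Hx. simpl. pose proof (HSlo x Hx).
    assert (Hn : forall n, (snd x - 1 <= snd n)%Z -> VK K n <= gfun n).
    { intros n Hn. destruct (Sd n) eqn:Hsn. apply IH; auto. rewrite VK_zero by auto.
      apply g_nonneg. lia. }
    rewrite <- (g_harm x) by lia. unfold sum4.
    pose proof (Hn (fst x + 1, snd x)%Z ltac:(simpl; lia));
    pose proof (Hn (fst x - 1, snd x)%Z ltac:(simpl; lia));
    pose proof (Hn (fst x, snd x + 1)%Z ltac:(simpl; lia));
    pose proof (Hn (fst x, snd x - 1)%Z ltac:(simpl; lia)).
    destruct (snd x =? N)%Z; lra.
Qed.

Lemma VK_ub : forall x, has_ub (fun K => VK K x).
Proof. intros x. exists (Rabs (gfun x)). intros r [K ->].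
  destruct (Sd x) eqn:Hx. pose proof (VK_le_g K x Hx). pose proof (Rle_abs (gfun x)). lra.
  rewrite VK_zero by auto. apply Rabs_pos. Qed.

Definition V (x : pt) : R := proj1_sig (growing_cv (fun K => VK K x) (fun K => VK_grow K x) (VK_ub x)).

Lemma V_cv : forall x, Un_cv (fun K => VK K x) (V x).
Proof. intros. unfold V. destruct (growing_cv _ _ _) as [l H]. simpl. auto. Qed.

Lemma V_ge_VK : forall K x, VK K x <= V x.
Proof. intros. apply (growing_ineq (fun K => VK K x)). intro; apply VK_grow. apply V_cv. Qed.

Lemma V_nonneg : forall x, 0 <= V x.
Proof. intros. pose proof (V_ge_VK 0 x). pose proof (VK_nonneg 0 x). lra. Qed.

Lemma cv_S : forall u l, Un_cv u l -> Un_cv (fun n => u (S n)) l.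
Proof. intros u l H eps He. destruct (H eps He) as [N0 HN0]. exists N0. intros. apply HN0. lia. Qed.
Lemma cv_const : forall c, Un_cv (fun _ => c) c.
Proof. intros c eps He. exists 0%nat. intros. unfold R_dist. rewrite Rminus_diag, Rabs_R0. auto. Qed.
Lemma cv_ext : forall u v l, (forall n, u n = v n) -> Un_cv u l -> Un_cv v l.
Proof. intros u v l H Hu eps He. destruct (Hu eps He) as [N0 HN0]. exists N0. intros. rewrite <- H. auto. Qed.

Lemma V_eq : forall x, Sd x = true -> V x = (if (snd x =? N)%Z then 1 else 0) + sum4 V x / 4.
Proof.
  intros x Hx.
  apply (UL_sequence (fun K => VK (S K) x)). apply (cv_S (fun K => VK K x)), V_cv.
  apply (cv_ext (fun K => (if (snd x =? N)%Z then 1 else 0) +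
          (/4) * (VK K (fst x + 1, snd x)%Z + VK K (fst x - 1, snd x)%Z +
                  VK K (fst x, snd x + 1)%Z + VK K (fst x, snd x - 1)%Z))).
  { intros K. simpl. rewrite Hx. simpl. unfold sum4. lra. }
  unfold sum4. replace (V (fst x + 1, snd x)%Z + V (fst x - 1, snd x)%Z + V (fst x, snd x + 1)%Z +
    V (fst x, snd x - 1)%Z) with ((V (fst x + 1, snd x)%Z + V (fst x - 1, snd x)%Z + V (fst x, snd x + 1)%Z +
    V (fst x, snd x - 1)%Z)) by auto.
  replace (_ / 4) with (/4 * (V (fst x + 1, snd x)%Z + V (fst x - 1, snd x)%Z + V (fst x, snd x + 1)%Z +
    V (fst x, snd x - 1)%Z)) by (unfold Rdiv; lra).
  apply CV_plus. apply cv_const. apply CV_mult. apply cv_const.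
  repeat apply CV_plus; apply V_cv.
Qed.

End Visits.

Lemma argmin : forall (f : pt -> R) l, l <> nil -> exists x, In x l /\ forall y, In y l -> f x <= f y.
Proof.
  intros f l. induction l as [|a l IH]; intros H. congruence.
  destruct l as [|b l].
  - exists a. split. left; auto. intros y [<-|[]]. lra.
  - destruct IH as [x [Hx Hm]]. discriminate.
    destruct (Rle_dec (f a) (f x)).
    + exists a. split. left; auto. intros y [<-|Hy]. lra. specialize (Hm y Hy). lra.
    + exists x. split. right; auto. intros y [<-|Hy]. lra. auto.
Qed.

Section Compare.
Variable Sd : pt -> bool.
Variable N L0 : Z.
Hypothesis HSlo : forall x, Sd x = true -> (L0 + 1 <= snd x)%Z.
Hypothesis HN : (L0 + 1 <= N)%Z.
Variable u : pt -> R.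
Hypothesis h1 : forall x, Sd x = true -> u x <= sum4 u x / 4 + (if (snd x =? N)%Z then 1 else 0).
Hypothesis h2 : forall x, Sd x = false -> u x <= 0.
Variable T C : Z.
Hypothesis h3 : forall x, (T <= snd x)%Z -> u x <= 0.
Hypothesis h4 : forall x, Sd x = true -> (snd x < T)%Z -> (Z.abs (fst x) <= C)%Z.

Definition box : list pt := flat_map (fun a => map (fun b => (a,b)) (zrange (L0+1) (T-1))) (zrange (-C) C).

Lemma compare : forall x, u x <= V Sd N L0 HSlo HN x.
Proof.
  pose (Vf := V Sd N L0 HSlo HN).
  pose (W := fun y => Vf y - u y).
  assert (Hpos : forall y, W y < 0 -> Sd y = true /\ In y box).
  { intros y Hy. unfold W in Hy. pose proof (V_nonneg Sd N L0 HSlo HN y). fold Vf in H.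
    destruct (Sd y) eqn:Hs; [|pose proof (h2 y Hs); lra]. split; auto.
    destruct (Z_lt_le_dec (snd y) T) as [Ht|Ht]; [|pose proof (h3 y Ht); lra].
    pose proof (h4 y Hs Ht). pose proof (HSlo y Hs).
    unfold box. apply in_flat_map. exists (fst y). split. apply In_zrange; lia.
    apply in_map_iff. exists (snd y). split. destruct y; auto. apply In_zrange; lia. }
  intros x0. destruct (Rle_dec (u x0) (Vf x0)) as [|Hn]; auto. exfalso.
  assert (Hw0 : W x0 < 0) by (unfold W; lra).
  destruct (argmin W box) as [xs [Hin Hmin]].
  { destruct (Hpos x0 Hw0) as [_ H]. destruct box; [contradiction|discriminate]. }
  assert (Hxs : W xs < 0) by (pose proof (Hmin x0 (proj2 (Hpos x0 Hw0))); lra).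
  assert (Hge : forall n, W xs <= W n).
  { intros n. destruct (Rlt_le_dec (W n) 0) as [h|h]. apply Hmin. apply Hpos; auto. lra. }
  assert (step : forall z, W z = W xs -> W (fst z, snd z + 1)%Z = W xs).
  { intros z Hz. destruct (Hpos z ltac:(lra)) as [Hs _].
    pose proof (V_eq Sd N L0 HSlo HN z Hs) as HV. fold Vf in HV. pose proof (h1 z Hs) as Hu.
    unfold sum4 in HV, Hu.
    pose proof (Hge (fst z + 1, snd z)%Z). pose proof (Hge (fst z - 1, snd z)%Z).
    pose proof (Hge (fst z, snd z + 1)%Z). pose proof (Hge (fst z, snd z - 1)%Z).
    unfold W in *. lra. }
  assert (Hall : forall j : nat, W (fst xs, snd xs + Z.of_nat j)%Z = W xs).
  { induction j. simpl. rewrite Z.add_0_r. destruct xs; auto.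
    rewrite Nat2Z.inj_succ. replace (snd xs + Z.succ (Z.of_nat j))%Z with
      (snd (fst xs, snd xs + Z.of_nat j)%Z + 1)%Z by (simpl; lia).
    replace (fst xs) with (fst (fst xs, snd xs + Z.of_nat j)%Z) at 1 by auto. apply step; auto. }
  specialize (Hall (Z.to_nat (T - snd xs))).
  pose proof (h3 (fst xs, snd xs + Z.of_nat (Z.to_nat (T - snd xs)))%Z ltac:(simpl; lia)).
  pose proof (V_nonneg Sd N L0 HSlo HN (fst xs, snd xs + Z.of_nat (Z.to_nat (T - snd xs)))%Z).
  unfold W, Vf in *. lra.
Qed.
End Compare.

Section Geo.
Variable p : nat.

Definition cp : Z := (2 ^ Z.of_nat p)%Z.
Definition m0 : Z := (4 * cp + 16)%Z.
Definition Mz (k : nat) : Z := (2 ^ Z.of_nat k * m0)%Z.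
Definition Bz (k : nat) : Z := (Mz k ^ Z.of_nat p)%Z.
Definition Tz (k : nat) : Z := (Bz k * Mz k)%Z.

Lemma cp_ge1 : (1 <= cp)%Z.
Proof. unfold cp. pose proof (Z.pow_pos_nonneg 2 (Z.of_nat p)). lia. Qed.
Lemma m0_ge : (20 <= m0)%Z.
Proof. unfold m0. pose proof cp_ge1. lia. Qed.
Lemma Mz_S : forall k, Mz (S k) = (2 * Mz k)%Z.
Proof. intros. unfold Mz. rewrite Nat2Z.inj_succ, Z.pow_succ_r by lia. ring. Qed.
Lemma Mz_ge : forall k, (m0 <= Mz k)%Z.
Proof. induction k. unfold Mz. simpl Z.of_nat. rewrite Z.pow_0_r. lia. rewrite Mz_S. pose proof m0_ge. lia. Qed.
Lemma Mz_mono : forall j k, (j <= k)%nat -> (Mz j <= Mz k)%Z.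
Proof. intros j k H. induction H. lia. rewrite Mz_S. pose proof (Mz_ge m). pose proof m0_ge. lia. Qed.
Lemma Bz_S : forall k, Bz (S k) = (cp * Bz k)%Z.
Proof. intros. unfold Bz, cp. rewrite Mz_S, Z.pow_mul_l. reflexivity. Qed.
Lemma Bz_ge1 : forall k, (1 <= Bz k)%Z.
Proof. intros. unfold Bz. pose proof (Mz_ge k). pose proof m0_ge.
  pose proof (Z.pow_le_mono_l 1 (Mz k) (Z.of_nat p) ltac:(lia)). rewrite Z.pow_1_l in H1 by lia. lia. Qed.
Lemma Tz_S : forall k, (Tz k < Tz (S k))%Z.
Proof. intros. unfold Tz. rewrite Bz_S, Mz_S. pose proof (Bz_ge1 k). pose proof (Mz_ge k).
  pose proof m0_ge. pose proof cp_ge1.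
  replace (cp * Bz k * (2 * Mz k))%Z with (2*cp*(Bz k * Mz k))%Z by ring.
  assert (0 < Bz k * Mz k)%Z by (apply Z.mul_pos_pos; lia). nia. Qed.
Lemma Tz_mono : forall j k, (j <= k)%nat -> (Tz j <= Tz k)%Z.
Proof. intros j k H. induction H. lia. pose proof (Tz_S m). lia. Qed.
Lemma Tz_ge : forall k, (Z.of_nat k <= Tz k)%Z.
Proof. induction k. unfold Tz. pose proof (Bz_ge1 0). pose proof (Mz_ge 0). pose proof m0_ge.
  simpl Z.of_nat. assert (0 < Bz 0 * Mz 0)%Z by (apply Z.mul_pos_pos; lia). lia.
  pose proof (Tz_S k). lia. Qed.

Definition ak (k : nat) : R := 2 - (/2) ^ k.
Definition epsk (k : nat) : R := 8 / (IZR (Bz k) * IZR (Mz k) ^ 2).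

Lemma half_pow_pos : forall k, 0 < (/2)^k.
Proof. intros. apply pow_lt. lra. Qed.
Lemma half_pow_le1 : forall k, (/2)^k <= 1.
Proof. induction k. simpl; lra. simpl. pose proof (half_pow_pos k). lra. Qed.
Lemma ak_bounds : forall k, 1 <= ak k <= 2.
Proof. intros. unfold ak. pose proof (half_pow_pos k). pose proof (half_pow_le1 k). lra. Qed.
Lemma ak_S : forall k, ak (S k) = ak k + (/2)^(S k).
Proof. intros. unfold ak. simpl. lra. Qed.
Lemma IZR_Mz : forall k, IZR (Mz k) = 2 ^ k * IZR m0.
Proof. intros. unfold Mz. rewrite mult_IZR, <- pow_IZR. reflexivity. Qed.
Lemma half_Mz : forall k, (/2)^(S k) * IZR (Mz k) = IZR m0 / 2.
Proof. intros. rewrite IZR_Mz. simpl.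
  replace (/ 2 * (/ 2) ^ k * (2 ^ k * IZR m0)) with (/2 * IZR m0 * ((/2)^k * 2^k)) by ring.
  rewrite <- Rpow_mult_distr. replace (/2 * 2) with 1 by field. rewrite pow1. field. Qed.

End Geo.

Section Geo2.
Variable p K : nat.
Variable h0 N : Z.

Definition inR0 (x : pt) : bool :=
  let s := fst x in let t := (snd x - h0)%Z in
  ((1 <=? t) && ((s*s <? t*t) || existsb (fun k => (Bz p k <=? t) && (s*s <? t*t*(Mz p k * Mz p k))) (seq 0 (S K))))%Z%bool.

Definition psi (k : nat) (x : pt) : R :=
  ak k * (IZR (snd x - h0) - IZR (Bz p k)) + epsk p k * (IZR (snd x - h0) ^ 2 - IZR (fst x) ^ 2).

Lemma psi_harm : forall k x, psi k x = sum4 (psi k) x / 4.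
Proof. intros. unfold sum4, psi. simpl. rewrite !minus_IZR, !plus_IZR. field. Qed.

Lemma IZR_facts : forall k, 1 <= IZR (cp p) /\ 20 <= IZR (Mz p k) /\ 1 <= IZR (Bz p k) /\
  IZR (Mz p (S k)) = 2 * IZR (Mz p k) /\ IZR (Bz p (S k)) = IZR (cp p) * IZR (Bz p k) /\
  IZR (m0 p) = 4 * IZR (cp p) + 16 /\ IZR (Tz p k) = IZR (Bz p k) * IZR (Mz p k).
Proof. intros. pose proof (cp_ge1 p). pose proof (Mz_ge p k). pose proof (m0_ge p). pose proof (Bz_ge1 p k).
  repeat split.
  - apply IZR_le; lia.
  - apply IZR_le; lia.
  - apply IZR_le; lia.
  - rewrite Mz_S, mult_IZR. auto.
  - rewrite Bz_S, mult_IZR. auto.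
  - unfold m0. rewrite plus_IZR, mult_IZR. auto.
  - unfold Tz. rewrite mult_IZR. auto.
Qed.

Lemma side : forall k n, (k <= K)%nat -> inR0 n = false -> (0 <= snd n - h0)%Z -> psi k n <= 0.
Proof.
  intros k n Hk Hn Ht. unfold inR0 in Hn. unfold psi.
  set (s := fst n) in *. set (t := (snd n - h0)%Z) in *.
  destruct (IZR_facts k) as [Hc [HM [HB _]]].
  pose proof (ak_bounds k) as Ha.
  set (a := ak k) in *. set (Br := IZR (Bz p k)) in *. set (Mr := IZR (Mz p k)) in *.
  assert (He : epsk p k * Br * Mr ^ 2 = 8) by (unfold epsk; fold Br Mr; field; nra).
  assert (He0 : 0 < epsk p k) by (unfold epsk; fold Br Mr; apply Rdiv_lt_0_compat; nra).
  set (e := epsk p k) in *.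
  destruct (Z.eq_dec t 0) as [H0|H0].
  - rewrite H0. simpl. assert (0 <= e * IZR s ^ 2) by (apply Rmult_le_pos; nra). nra.
  - assert (Ht1 : (1 <= t)%Z) by lia.
    assert (E1: (1 <=? t)%Z = true) by (apply Z.leb_le; lia). rewrite E1, Bool.andb_true_l in Hn.
    apply Bool.orb_false_iff in Hn as [H1 H2].
    destruct (Z.ltb_spec (s*s) (t*t)) as [|Hst]; try discriminate.
    assert (Hst' : IZR t ^ 2 <= IZR s ^ 2) by (rewrite !pow_IZR; apply IZR_le; simpl; lia).
    assert (Htr : 1 <= IZR t) by (apply IZR_le; lia).
    destruct (Rlt_le_dec (IZR t) Br) as [Hlt|Hge].
    + assert (a * (IZR t - Br) <= 0) by nra. assert (e * (IZR t ^ 2 - IZR s ^ 2) <= 0) by nra. lra.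
    + assert (HBt : (Bz p k <= t)%Z) by (apply le_IZR; auto).
      assert (Hk' : ~ ((s * s < t * t * (Mz p k * Mz p k)))%Z).
      { intro Hc'. assert (existsb (fun k0 : nat => ((Bz p k0 <=? t) && (s * s <? t * t * (Mz p k0 * Mz p k0)))%Z%bool) (seq 0 (S K)) = true).
        { apply existsb_exists. exists k. split. apply in_seq. lia.
          apply Bool.andb_true_iff. split. apply Z.leb_le; auto. apply Z.ltb_lt; auto. }
        congruence. }
      assert (Hsm : IZR t ^ 2 * Mr ^ 2 <= IZR s ^ 2).
      { unfold Mr. rewrite !pow_IZR, <- mult_IZR. apply IZR_le. simpl. lia. }
      assert (Hq : e * IZR t * (Mr^2 - 1) >= 2).
      { assert (e * IZR t * (Mr^2 - 1) >= e * Br * (Mr ^ 2 - 1)).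
        { apply Rle_ge. apply Rmult_le_compat_r. nra. apply Rmult_le_compat_l; lra. }
        assert (e * Br * Mr^2 = 8) by exact He. assert (e * Br <= 1) by nra. nra. }
      assert (e * (IZR t ^ 2 - IZR s ^ 2) <= - (e * IZR t * (Mr^2 - 1)) * IZR t) by nra.
      nra.
Qed.

Lemma iface : forall k n, (snd n - h0 = Tz p k)%Z -> psi k n <= psi (S k) n.
Proof.
  intros k n Ht. unfold psi, epsk. rewrite Ht.
  destruct (IZR_facts k) as [Hc [HM [HB [HMS [HBS [Hm0 HT]]]]]].
  rewrite HT, HMS, HBS. rewrite ak_S.
  pose proof (half_Mz p k) as Hh. rewrite Hm0 in Hh.
  pose proof (ak_bounds k). pose proof (ak_bounds (S k)) as Ha'. rewrite ak_S in Ha'.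
  set (a := ak k) in *. set (h := (/2)^(S k)) in *. set (B := IZR (Bz p k)) in *.
  set (M := IZR (Mz p k)) in *. set (c := IZR (cp p)) in *. set (s := IZR (fst n)).
  set (e := 8 / (B * M ^ 2)). set (e' := 8 / (c * B * (2 * M) ^ 2)).
  assert (Hid : (a + h) * (B * M - c * B) + e' * ((B * M) ^ 2 - s ^ 2) -
     (a * (B * M - B) + e * ((B * M) ^ 2 - s ^ 2)) =
     B * (h * M - 2 * c - 8) + B * (c * (2 - (a + h)) + a) + e' * (B * M)^2 + (e - e') * s ^ 2).
  { unfold e, e'. field. split; nra. }
  assert (Hpos : 0 < c * B * (2 * M) ^ 2) by (repeat apply Rmult_lt_0_compat; try apply pow_lt; lra).
  assert (Hpos2 : 0 < B * M ^ 2) by (repeat apply Rmult_lt_0_compat; try apply pow_lt; lra).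
  assert (He' : 0 <= e'). { unfold e'. apply Rlt_le, Rdiv_lt_0_compat; lra. }
  assert (Hee : e' <= e).
  { unfold e, e'. unfold Rdiv. apply Rmult_le_compat_l. lra. apply Rinv_le_contravar. lra.
    replace (c * B * (2 * M) ^ 2) with (4 * c * (B * M^2)) by ring. nra. }
  assert (0 <= e' * (B * M)^2) by (apply Rmult_le_pos; [lra| apply pow2_ge_0]).
  assert (0 <= (e - e') * s^2) by (apply Rmult_le_pos; [lra| apply pow2_ge_0]).
  assert (0 <= B * (c * (2 - (a + h)) + a)) by (apply Rmult_le_pos; nra).
  rewrite Hh in Hid. assert (B * ((4 * c + 16) / 2 - 2 * c - 8) = 0) by field. lra.
Qed.

Lemma top : forall n, (snd n - h0 = Tz p K)%Z -> (4 * (N - h0) <= Tz p K)%Z -> psi K n <= 4 * IZR (snd n - N).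
Proof.
  intros n Ht HN. unfold psi. rewrite Ht.
  destruct (IZR_facts K) as [Hc [HM [HB [_ [_ [_ HT]]]]]]. rewrite HT.
  replace (snd n - N)%Z with (Tz p K - (N - h0))%Z by lia.
  rewrite minus_IZR. apply IZR_le in HN. rewrite mult_IZR, HT in HN.
  pose proof (ak_bounds K).
  unfold epsk. set (B := IZR (Bz p K)) in *. set (M := IZR (Mz p K)) in *.
  assert (8 / (B * M ^ 2) * (B * M) ^ 2 = 8 * B) by (field; nra).
  assert (0 <= 8 / (B * M ^ 2) * IZR (fst n) ^ 2).
  { apply Rmult_le_pos. apply Rlt_le, Rdiv_lt_0_compat; nra. nra. }
  assert (8 * B <= B * M) by nra.
  set (a := ak K) in *. set (q := IZR (N - h0)) in *. nra.
Qed.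

End Geo2.

Section Geo3.
Variable p K : nat.
Variable h0 N : Z.
Hypothesis HTop : (4 * (N - h0) <= Tz p K)%Z.

Definition inD k x := (inR0 p K h0 x && (snd x - h0 <? Tz p k))%Z%bool.
Definition piece k x := if inD k x then psi p h0 k x else 0.
Fixpoint pm k x := match k with O => piece 0 x | S k' => Rmax (pm k' x) (piece (S k') x) end.
Definition topf (x : pt) := 4 * IZR (snd x - N).
Definition Phi x := Rmax (Rmax 0 (topf x)) (pm K x).
Definition zeta (x : pt) := -4 * IZR (Z.max 0 (snd x - N)).
Definition uf x := zeta x + Phi x.

Lemma pm_ge : forall k j x, (j <= k)%nat -> piece j x <= pm k x.
Proof. induction k; intros j x H. inversion H; subst; simpl; lra.
  simpl. inversion H; subst. apply Rmax_r. eapply Rle_trans. apply IHk. lia. apply Rmax_l. Qed.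
Lemma pm_le : forall k x X, (forall j, (j <= k)%nat -> piece j x <= X) -> pm k x <= X.
Proof. induction k; intros x X H. simpl. apply H; lia. simpl. apply Rmax_lub. apply IHk. intros; apply H; lia.
  apply H; lia. Qed.
Lemma Phi_ge0 : forall x, 0 <= Phi x.
Proof. intros. unfold Phi. eapply Rle_trans; [|apply Rmax_l]. apply Rmax_l. Qed.
Lemma Phi_ge_top : forall x, topf x <= Phi x.
Proof. intros. unfold Phi. eapply Rle_trans; [|apply Rmax_l]. apply Rmax_r. Qed.
Lemma Phi_ge_piece : forall j x, (j <= K)%nat -> piece j x <= Phi x.
Proof. intros. unfold Phi. eapply Rle_trans; [|apply Rmax_r]. apply pm_ge; auto. Qed.

Lemma nb : forall k n, (k <= K)%nat -> (0 <= snd n - h0 <= Tz p k)%Z -> psi p h0 k n <= Phi n.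
Proof.
  intros k n Hk Ht. destruct (inD k n) eqn:HD.
  - pose proof (Phi_ge_piece k n Hk). unfold piece in H. rewrite HD in H. auto.
  - unfold inD in HD. destruct (inR0 p K h0 n) eqn:HR.
    + simpl in HD. apply Z.ltb_ge in HD. assert (Heq : (snd n - h0 = Tz p k)%Z) by lia.
      destruct (Nat.eq_dec k K) as [->|Hne].
      * pose proof (top p K h0 N n Heq HTop). pose proof (Phi_ge_top n). unfold topf in *. lra.
      * pose proof (iface p h0 k n Heq).
        assert (HD' : inD (S k) n = true).
        { unfold inD. rewrite HR. simpl. apply Z.ltb_lt. pose proof (Tz_S p k). lia. }
        pose proof (Phi_ge_piece (S k) n ltac:(lia)). unfold piece in H0. rewrite HD' in H0. lra.
    + pose proof (side p K h0 k n Hk HR ltac:(lia)). pose proof (Phi_ge0 n). lra.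
Qed.

Lemma HSlo : forall x, inR0 p K h0 x = true -> (h0 + 1 <= snd x)%Z.
Proof. intros x H. unfold inR0 in H. apply Bool.andb_true_iff in H as [H _]. apply Z.leb_le in H. lia. Qed.

Lemma Phi_sub : forall x, Phi x <= sum4 Phi x / 4.
Proof.
  intros x.
  assert (Hn : forall f : pt -> R, (forall n, f n <= Phi n) -> sum4 f x / 4 <= sum4 Phi x / 4).
  { intros f Hf. unfold sum4. pose proof (Hf (fst x + 1, snd x)%Z). pose proof (Hf (fst x - 1, snd x)%Z).
    pose proof (Hf (fst x, snd x + 1)%Z). pose proof (Hf (fst x, snd x - 1)%Z). lra. }
  unfold Phi at 1. apply Rmax_lub. apply Rmax_lub.
  - pose proof (Hn (fun _ => 0) Phi_ge0). unfold sum4 in *. lra.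
  - assert (topf x = sum4 topf x / 4) by (unfold sum4, topf; simpl; rewrite !minus_IZR, !plus_IZR; field).
    rewrite H. apply Hn. apply Phi_ge_top.
  - apply pm_le. intros j Hj. unfold piece. destruct (inD j x) eqn:HD.
    + rewrite psi_harm. unfold inD in HD. apply Bool.andb_true_iff in HD as [HR HT].
      apply Z.ltb_lt in HT. pose proof (HSlo x HR).
      unfold sum4. 
      pose proof (nb j (fst x + 1, snd x)%Z Hj ltac:(simpl; lia)).
      pose proof (nb j (fst x - 1, snd x)%Z Hj ltac:(simpl; lia)).
      pose proof (nb j (fst x, snd x + 1)%Z Hj ltac:(simpl; lia)).
      pose proof (nb j (fst x, snd x - 1)%Z Hj ltac:(simpl; lia)). lra.
    + pose proof (Hn (fun _ => 0) Phi_ge0). unfold sum4 in *. lra.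
Qed.

Lemma zeta_eq : forall x, zeta x = sum4 zeta x / 4 + (if (snd x =? N)%Z then 1 else 0).
Proof.
  intros [a b]. unfold sum4, zeta. simpl.
  destruct (Z.lt_trichotomy b N) as [Hl|[He|Hg]].
  - replace (Z.max 0 (b + 1 - N)) with 0%Z by lia. replace (Z.max 0 (b - 1 - N)) with 0%Z by lia.
    replace (Z.max 0 (b - N)) with 0%Z by lia. destruct (Z.eqb_spec b N); try lia. lra.
  - subst. replace (Z.max 0 (N + 1 - N)) with 1%Z by lia. replace (Z.max 0 (N - 1 - N)) with 0%Z by lia.
    replace (Z.max 0 (N - N)) with 0%Z by lia. rewrite Z.eqb_refl. lra.
  - replace (Z.max 0 (b + 1 - N)) with (b + 1 - N)%Z by lia. replace (Z.max 0 (b - 1 - N)) with (b - 1 - N)%Z by lia.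
    replace (Z.max 0 (b - N)) with (b - N)%Z by lia. destruct (Z.eqb_spec b N); try lia.
    rewrite !minus_IZR, !plus_IZR. lra.
Qed.

Lemma h1 : forall x, uf x <= sum4 uf x / 4 + (if (snd x =? N)%Z then 1 else 0).
Proof. intros. unfold uf. pose proof (zeta_eq x). pose proof (Phi_sub x). unfold sum4 in *. lra. Qed.

Lemma u_zero : forall x, pm K x = 0 -> uf x <= 0.
Proof. intros x H. unfold uf, Phi, zeta, topf. rewrite H.
  destruct (Z.le_gt_cases (snd x) N).
  - replace (Z.max 0 (snd x - N)) with 0%Z by lia. assert (IZR (snd x - N) <= 0) by (apply IZR_le; lia).
    rewrite (Rmax_left 0 (4 * IZR (snd x - N))) by lra. rewrite Rmax_left by lra. lra.
  - replace (Z.max 0 (snd x - N)) with (snd x - N)%Z by lia. assert (0 <= IZR (snd x - N)) by (apply IZR_le; lia).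
    rewrite (Rmax_right 0 (4 * IZR (snd x - N))) by lra. rewrite Rmax_left by lra. lra.
Qed.

Lemma pm_zero : forall x, (forall j, (j <= K)%nat -> inD j x = false) -> pm K x = 0.
Proof. intros x H. apply Rle_antisym. apply pm_le. intros j Hj. unfold piece. rewrite H by auto. lra.
  pose proof (pm_ge K 0 x ltac:(lia)). unfold piece in H0. rewrite H in H0 by lia. auto. Qed.

Lemma h2 : forall x, inR0 p K h0 x = false -> uf x <= 0.
Proof. intros. apply u_zero, pm_zero. intros. unfold inD. rewrite H. auto. Qed.

Lemma h3 : forall x, (h0 + Tz p K <= snd x)%Z -> uf x <= 0.
Proof. intros. apply u_zero, pm_zero. intros. unfold inD. pose proof (Tz_mono p j K H0).
  destruct (Z.ltb_spec (snd x - h0) (Tz p j)). lia. apply Bool.andb_false_r. Qed.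

Lemma h4 : forall x, inR0 p K h0 x = true -> (snd x < h0 + Tz p K)%Z -> (Z.abs (fst x) <= Tz p K * Mz p K)%Z.
Proof.
  intros x H Ht. unfold inR0 in H. apply Bool.andb_true_iff in H as [H1 H]. apply Z.leb_le in H1.
  set (s := fst x) in *. set (t := (snd x - h0)%Z) in *.
  assert (Hm : exists m, (1 <= m <= Mz p K)%Z /\ (s * s < t * t * (m * m))%Z).
  { apply Bool.orb_true_iff in H as [H|H].
    - exists 1%Z. apply Z.ltb_lt in H. pose proof (Mz_ge p K). pose proof (m0_ge p). split. lia. lia.
    - apply existsb_exists in H as [k [Hk H]]. apply in_seq in Hk.
      apply Bool.andb_true_iff in H as [_ H]. apply Z.ltb_lt in H. exists (Mz p k). split.
      pose proof (Mz_ge p k). pose proof (m0_ge p). pose proof (Mz_mono p k K ltac:(lia)). lia. auto. }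
  destruct Hm as [m [Hm Hs]].
  assert (Z.abs s < t * m)%Z.
  { destruct (Z.lt_ge_cases (Z.abs s) (t*m)); auto.
    assert (t * m * (t * m) <= Z.abs s * Z.abs s)%Z by (apply Z.mul_le_mono_nonneg; lia).
    destruct (Z.abs_spec s) as [[? E]|[? E]]; rewrite E in *; nia. }
  assert (t * m <= Tz p K * Mz p K)%Z by (apply Z.mul_le_mono_nonneg; lia). lia.
Qed.

End Geo3.

Section Final.
Variable p K : nat.
Variable h0 N : Z.
Hypothesis HTop : (4 * (N - h0) <= Tz p K)%Z.
Hypothesis HN1 : (h0 + Bz p 0 + 1 <= N)%Z.

Lemma HN : (h0 + 1 <= N)%Z.
Proof. pose proof (Bz_ge1 p 0). lia. Qed.

Definition Vf := V (inR0 p K h0) N h0 (HSlo p K h0) HN.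

Lemma inR0_axis : forall t, (1 <= t)%Z -> inR0 p K h0 (0%Z, h0 + t)%Z = true.
Proof. intros t Ht. unfold inR0. simpl. apply Bool.andb_true_iff. split. apply Z.leb_le; lia.
  apply Bool.orb_true_iff. left. apply Z.ltb_lt. nia. Qed.

Lemma V_y2 : 1 <= Vf (0%Z, h0 + Bz p 0 + 1)%Z.
Proof.
  unfold Vf. eapply Rle_trans; [| apply (compare (inR0 p K h0) N h0 (HSlo p K h0) HN (uf p K h0 N)
     (fun x _ => h1 p K h0 N HTop x) (h2 p K h0 N) (h0 + Tz p K)%Z (Tz p K * Mz p K)%Z (h3 p K h0 N) (h4 p K h0))].
  unfold uf. assert (zeta N (0%Z, h0 + Bz p 0 + 1)%Z = 0).
  { unfold zeta. simpl. replace (Z.max 0 (h0 + Bz p 0 + 1 - N)) with 0%Z by lia. lra. }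
  rewrite H. rewrite Rplus_0_l.
  eapply Rle_trans; [| apply (Phi_ge_piece p K h0 N 0 _ ltac:(lia))].
  unfold piece. assert (HD : inD p K h0 0 (0%Z, h0 + Bz p 0 + 1)%Z = true).
  { unfold inD. replace (h0 + Bz p 0 + 1)%Z with (h0 + (Bz p 0 + 1))%Z by lia.
    rewrite inR0_axis by (pose proof (Bz_ge1 p 0); lia). simpl. apply Z.ltb_lt.
    unfold Tz. pose proof (Bz_ge1 p 0). pose proof (Mz_ge p 0). pose proof (m0_ge p). nia. }
  rewrite HD. unfold psi. simpl.
  replace (h0 + Bz p 0 + 1 - h0)%Z with (Bz p 0 + 1)%Z by lia. rewrite plus_IZR.
  unfold ak. simpl.
  assert (0 < epsk p 0).
  { unfold epsk. destruct (IZR_facts p 0) as [_ [HM [HB _]]]. apply Rdiv_lt_0_compat. lra.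
    apply Rmult_lt_0_compat. lra. apply pow_lt. lra. }
  assert (0 <= epsk p 0 * ((IZR (Bz p 0) + 1) ^ 2 - 0 ^ 2)).
  { apply Rmult_le_pos. lra. destruct (IZR_facts p 0) as [_ [HM [HB _]]]. nra. }
  lra.
Qed.

Lemma V_chain : forall j : nat, (/4)^j * Vf (0%Z, h0 + 1 + Z.of_nat j)%Z <= Vf (0%Z, h0 + 1)%Z.
Proof.
  induction j.
  - simpl. rewrite Z.add_0_r. lra.
  - eapply Rle_trans; [| apply IHj].
    assert (Hs : inR0 p K h0 (0%Z, h0 + 1 + Z.of_nat j)%Z = true).
    { replace (h0 + 1 + Z.of_nat j)%Z with (h0 + (1 + Z.of_nat j))%Z by lia. apply inR0_axis. lia. }
    pose proof (V_eq (inR0 p K h0) N h0 (HSlo p K h0) HN _ Hs) as HV. fold Vf in HV. unfold sum4 in HV. simpl in HV.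
    pose proof (V_nonneg (inR0 p K h0) N h0 (HSlo p K h0) HN). fold Vf in H.
    pose proof (H (1, h0 + 1 + Z.of_nat j)%Z). pose proof (H (-1, h0 + 1 + Z.of_nat j)%Z).
    pose proof (H (0, h0 + 1 + Z.of_nat j - 1)%Z).
    replace (h0 + 1 + Z.of_nat (S j))%Z with (h0 + 1 + Z.of_nat j + 1)%Z by lia.
    assert (0 <= (if (h0 + 1 + Z.of_nat j =? N)%Z then 1 else 0)) by (destruct (_ =? _)%Z; lra).
    simpl pow. pose proof (pow_lt (/4) j ltac:(lra)).
    replace (0 + 1)%Z with 1%Z in HV by lia. replace (0 - 1)%Z with (-1)%Z in HV by lia.
    assert ((/4)^j * (/4 * Vf (0%Z, h0 + 1 + Z.of_nat j + 1)%Z) <= (/4)^j * Vf (0%Z, h0 + 1 + Z.of_nat j)%Z).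
    { apply Rmult_le_compat_l. lra. rewrite HV. lra. }
    lra.
Qed.

Lemma V_y : (/4)^(Z.to_nat (Bz p 0)) <= Vf (0%Z, h0 + 1)%Z.
Proof.
  pose proof (V_chain (Z.to_nat (Bz p 0))). pose proof (Bz_ge1 p 0).
  replace (h0 + 1 + Z.of_nat (Z.to_nat (Bz p 0)))%Z with (h0 + Bz p 0 + 1)%Z in H by lia.
  pose proof V_y2. pose proof (pow_lt (/4) (Z.to_nat (Bz p 0)) ltac:(lra)). nra.
Qed.

End Final.

Lemma ln_le' : forall x y, 0 < x -> x <= y -> ln x <= ln y.
Proof. intros. destruct (Rle_lt_or_eq_dec x y H0). apply Rlt_le, ln_increasing; auto. subst; lra. Qed.

Lemma RL : forall (alpha sa tr mr xr : R) (p : nat), 0 <= sa -> 1 <= mr -> 1 <= tr -> mr ^ p <= tr ->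
  sa < tr * mr -> tr <= xr -> (1 <= p)%nat -> 1 + / INR p <= alpha -> rpow sa (1 / alpha) < xr.
Proof.
  intros alpha sa tr mr xr p Hs Hm Ht Hmp Hst Hx Hp Ha.
  assert (HpR : 1 <= INR p) by (apply (le_INR 1); auto).
  assert (Hal : 1 < alpha). { pose proof (Rinv_0_lt_compat (INR p) ltac:(lra)). lra. }
  unfold rpow. destruct (Req_EM_T sa 0) as [->|Hs0]. lra.
  assert (Hsa : 0 < sa) by lra. unfold Rpower.
  rewrite <- (exp_ln xr) by lra. apply exp_increasing.
  assert (H1 : ln sa < ln tr + ln mr) by (rewrite <- ln_mult by lra; apply ln_increasing; lra).
  assert (H2 : INR p * ln mr <= ln tr) by (rewrite <- ln_pow by lra; apply ln_le'; [apply pow_lt; lra | auto]).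
  assert (H3 : 0 <= ln tr) by (rewrite <- ln_1; apply ln_le'; lra).
  assert (H4 : ln tr <= ln xr) by (apply ln_le'; lra).
  assert (H5 : ln mr <= ln tr * / INR p).
  { apply (Rmult_le_reg_l (INR p)). lra. replace (INR p * (ln tr * / INR p)) with (ln tr) by (field; lra). lra. }
  assert (H6 : ln tr * (1 + / INR p) <= alpha * ln tr) by nra.
  assert (H7 : ln sa < alpha * ln xr) by nra.
  apply (Rmult_lt_reg_l alpha). lra. replace (alpha * (1 / alpha * ln sa)) with (ln sa) by (field; lra). lra.
Qed.

Lemma geom : forall alpha p K h0 x, (0 <= h0)%Z -> (1 <= p)%nat -> 1 + / INR p <= alpha ->
  inR0 p K h0 x = true -> ~ below_curve alpha x.
Proof.
  intros alpha p K h0 x Hh0 Hp Ha H [_ Hb].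
  unfold inR0 in H. apply Bool.andb_true_iff in H as [H1 H]. apply Z.leb_le in H1.
  set (s := fst x) in *. set (t := (snd x - h0)%Z) in *.
  assert (Hm : exists m, (1 <= m)%Z /\ (m ^ Z.of_nat p <= t)%Z /\ (s * s < t * t * (m * m))%Z).
  { apply Bool.orb_true_iff in H as [H|H].
    - exists 1%Z. apply Z.ltb_lt in H. rewrite Z.pow_1_l by lia. split. lia. split. lia. lia.
    - apply existsb_exists in H as [k [Hk H]].
      apply Bool.andb_true_iff in H as [H' H]. apply Z.ltb_lt in H. apply Z.leb_le in H'. exists (Mz p k). split.
      pose proof (Mz_ge p k). pose proof (m0_ge p). lia. split; auto. }
  destruct Hm as [m [Hm [Hmp Hs]]].
  assert (Habs : (Z.abs s < t * m)%Z).
  { destruct (Z.lt_ge_cases (Z.abs s) (t*m)); auto.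
    assert (t * m * (t * m) <= Z.abs s * Z.abs s)%Z by (apply Z.mul_le_mono_nonneg; lia).
    destruct (Z.abs_spec s) as [[? E]|[? E]]; rewrite E in *; nia. }
  assert (rpow (Rabs (IZR s)) (1 / alpha) < IZR (snd x)).
  { apply (RL alpha (Rabs (IZR s)) (IZR t) (IZR m) (IZR (snd x)) p); auto.
    - apply Rabs_pos.
    - apply IZR_le; lia.
    - apply IZR_le; lia.
    - rewrite pow_IZR. apply IZR_le; lia.
    - rewrite <- abs_IZR, <- mult_IZR. apply IZR_lt; lia.
    - apply IZR_le. unfold t. lia. }
  lra.
Qed.

Lemma Qr_start_zero : forall Sd j z y, Sd z = false -> Qr Sd j z y = 0.
Proof. intros Sd j. induction j; intros z y H; simpl.
  - destruct (Sd y) eqn:Hy; simpl; auto. destruct (Z.eqb_spec (fst z) (fst y)), (Z.eqb_spec (snd z) (snd y)); simpl; auto.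
    destruct z, y; simpl in *; subst; congruence.
  - destruct (Sd y); auto. unfold sum4. rewrite !IHj by auto. lra.
Qed.

Lemma TP : forall (A : zset) (Sd : pt -> bool) (N h0 : Z) (K1 : nat)
  (Hok : forall n, Sd n = true -> (A n || (snd n =? 0)%Z)%bool = false),
  / 4 * VK Sd N K1 (0%Z, h0 + 1)%Z <= Hbar_partial A N (0%Z, h0) (S K1).
Proof.
  intros. unfold Hbar_partial.
  set (Kz := Z.of_nat (S K1)).
  eapply Rle_trans with (sumR (fun i => sumR (fun j => Qr Sd j (i, N) (0%Z, h0 + 1)%Z / 4 ^ (S j)) (seq 0 (S K1))) (zrange (- Kz) Kz)).
  - rewrite sumR_swap. rewrite VK_sum. rewrite <- sumR_scal. apply Req_le. apply sumR_ext.
    intros j Hj. apply in_seq in Hj. rewrite (E_lemma Sd N Kz j) by (simpl; lia).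
    rewrite sumR_div. simpl pow. field. apply pow_nonzero; lra.
  - apply sumR_le. intros i _. destruct (A (i, N)) eqn:HA.
    + rewrite (sumR_ext _ (fun _ => 0)). rewrite sumR_zero. lra.
      intros j _. rewrite Qr_start_zero. unfold Rdiv; lra.
      destruct (Sd (i,N)) eqn:HS; auto. specialize (Hok _ HS). rewrite HA in Hok. discriminate.
    + change (seq 0 (S (S K1))) with (0%nat :: seq 1 (S K1)).
      rewrite sumR_cons, <- seq_shift, sumR_map.
      assert (0 <= INR (paths_to A 0 (i, N) (0%Z, h0)) / 4 ^ 0) by (unfold Rdiv; apply Rmult_le_pos; [apply pos_INR| apply Rlt_le, Rinv_0_lt_compat, pow_lt; lra]).
      assert (sumR (fun j => Qr Sd j (i, N) (0%Z, h0 + 1)%Z / 4 ^ S j) (seq 0 (S K1)) <=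
              sumR (fun x => INR (paths_to A (S x) (i, N) (0%Z, h0)) / 4 ^ S x) (seq 0 (S K1))).
      { apply sumR_le. intros j _. unfold Rdiv. apply Rmult_le_compat_r.
        apply Rlt_le, Rinv_0_lt_compat, pow_lt; lra.
        apply (Qr_le_paths_w A Sd Hok j (i,N) (0%Z,h0)). }
      lra.
Qed.

Theorem lemma1 (alpha : R) (B : zset) (h0 : Z)
  (Halpha : 1 < alpha)
  (HBH : forall x : pt, B x = true -> (0 <= snd x)%Z)
  (HBne : exists x : pt, B x = true)
  (HBhat_fin : exists l : list pt, forall x, in_Bhat alpha B x -> In x l)
  (Hh0 : is_h0 alpha B h0) :
  exists c : R, 0 < c /\
    exists N0 : Z, forall N : Z, (N0 <= N)%Z ->
      forall eps : R, 0 < eps ->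
        exists K : nat, c - eps <= total_partial alpha B h0 N K.
Proof.
  assert (Hh0pos : (0 <= h0)%Z).
  { destruct Hh0 as [[_ [[x [[Hx _] Hs]] _]] | [_ [H _]]]. subst. apply HBH; auto. lia. }
  set (p := Z.to_nat (up (/ (alpha - 1)))).
  assert (Hup := archimed (/ (alpha - 1))). destruct Hup as [Hup1 _].
  assert (Hinv : 0 < / (alpha - 1)) by (apply Rinv_0_lt_compat; lra).
  assert (Hupz : (1 <= up (/ (alpha - 1)))%Z).
  { destruct (Z.le_gt_cases 1 (up (/ (alpha - 1)))); auto.
    assert (IZR (up (/ (alpha - 1))) <= 0) by (apply IZR_le; lia). lra. }
  assert (HpR : INR p = IZR (up (/ (alpha - 1)))).
  { unfold p. rewrite INR_IZR_INZ, Z2Nat.id by lia. auto. }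
  assert (Hp1 : (1 <= p)%nat) by (unfold p; lia).
  assert (Hpa : 1 + / INR p <= alpha).
  { rewrite HpR. assert (/ IZR (up (/ (alpha - 1))) < / / (alpha - 1)).
    { apply Rinv_lt_contravar. apply Rmult_lt_0_compat; lra. auto. }
    rewrite Rinv_inv in H. lra. }
  set (A' := setU B (in_lh alpha h0)).
  assert (Hok : forall K n, inR0 p K h0 n = true -> (A' n || (snd n =? 0)%Z)%bool = false).
  { intros K n Hn. pose proof (HSlo p K h0 n Hn).
    assert (Hnb : ~ below_curve alpha n) by (apply (geom alpha p K h0 n); auto).
    unfold A', setU, in_lh. destruct (Z.eqb_spec (snd n) h0); try lia. destruct (Z.eqb_spec (snd n) 0); try lia.
    destruct (B n) eqn:HB; [|reflexivity]. exfalso.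
    assert (Hin : in_Bhat alpha B n) by (split; auto).
    destruct Hh0 as [[_ [_ Hmax]] | [Hno _]].
    - specialize (Hmax n Hin). lia.
    - apply (Hno n Hin). }
  exists (/4 * (/4) ^ (Z.to_nat (Bz p 0))). split.
  { apply Rmult_lt_0_compat. lra. apply pow_lt. lra. }
  exists (h0 + Bz p 0 + 1)%Z. intros N HN1 eps Heps.
  set (K := Z.to_nat (4 * (N - h0))).
  assert (HTop : (4 * (N - h0) <= Tz p K)%Z).
  { pose proof (Tz_ge p K). unfold K in *. rewrite Z2Nat.id in H. auto. pose proof (Bz_ge1 p 0). lia. }
  pose proof (V_y p K h0 N HTop HN1) as HVy.
  pose proof (V_cv (inR0 p K h0) N h0 (HSlo p K h0) (HN p h0 N HN1) (0%Z, h0 + 1)%Z) as Hcv.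
  destruct (Hcv (4 * eps) ltac:(lra)) as [N1 HN1'].
  specialize (HN1' N1 (le_n _)). unfold R_dist in HN1'.
  fold (Vf p K h0 N HN1) in HN1'.
  apply Rabs_def2 in HN1' as [HA HB'].
  exists (S N1).
  pose proof (TP A' (inR0 p K h0) N h0 N1 (Hok K)) as HTP.
  assert (HH : Hbar_partial A' N (0%Z, h0) (S N1) <= total_partial alpha B h0 N (S N1)).
  { unfold total_partial. fold A'.
    apply (sumR_elem (fun i => Hbar_partial A' N (i, h0) (S N1))).
    - apply In_zrange. unfold lh_bound, Defs.Zfloor.
      assert (0 <= rpow (IZR h0) alpha).
      { unfold rpow. destruct (Req_EM_T (IZR h0) 0). lra. unfold Rpower. left. apply exp_pos. }
      destruct (archimed (rpow (IZR h0) alpha)) as [Ha _].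
      assert (1 <= up (rpow (IZR h0) alpha))%Z.
      { destruct (Z.le_gt_cases 1 (up (rpow (IZR h0) alpha))); auto.
        assert (IZR (up (rpow (IZR h0) alpha)) <= 0) by (apply IZR_le; lia). lra. }
      lia.
    - intros i _. unfold Hbar_partial. apply sumR_nonneg. intros z _. destruct (A' (z, N)). lra.
      apply sumR_nonneg. intros m _. unfold Rdiv. apply Rmult_le_pos. apply pos_INR.
      apply Rlt_le, Rinv_0_lt_compat, pow_lt; lra. }
  lra.
Qed.
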